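(* For all positive integers $m,n$, the posets $\mathcal P(m,n)$ and $\mathcal P(n,m)$ are isomorphic.
   Context: $\mathcal P(m,n)$ is the poset whose elements are the monomials of degree $m$ in $K[x_0,\dots,x_n]$, with partial order $\ge_B$ generated (as the reflexive-transitive closure) by the covering relation: $\mathbf x^A\succ_B\mathbf x^B$ iff there is $i<n$ with $\mathbf x^A=\frac{x_i}{x_{i+1}}\mathbf x^B$. *)

(* Defs.v *)
From mathcomp Require Import all_boot.
From Stdlib Require Import Relations.
Set Implicit Arguments. Unset Strict Implicit. Unset Printing Implicit Defensive.

(* Monomials of degree m in K[x_0,...,x_n], represented by their exponent
   vectors A : 'I_(n+1) -> nat with |A| = m. *)
Definition monomial (m n : nat) : Type :=
  {A : {ffun 'I_n.+1 -> nat} | \sum_(i < n.+1) A i == m}.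

(* Covering relation x^A >_B x^B : x^A = (x_i / x_{i+1}) x^B for some i < n,
   i.e. A = B + e_i - e_{i+1}. *)
Definition Bcover (m n : nat) (A B : monomial m n) : Prop :=
  exists (i j : 'I_n.+1),
    (j : nat) = i.+1 /\
    (sval A) i = (sval B) i + 1 /\
    (sval B) j = (sval A) j + 1 /\
    (forall k : 'I_n.+1, k != i -> k != j -> (sval A) k = (sval B) k).

Definition Bge (m n : nat) : relation (monomial m n) :=
  clos_refl_trans (monomial m n) (@Bcover m n).

Definition poset_iso (m n m' n' : nat) : Prop :=
  exists f : monomial m n -> monomial m' n',
    bijective f /\ (forall A B, Bge A B <-> Bge (f A) (f B)).

(* Main.v *)
Require Import Defs.
From mathcomp Require Import all_boot zify.
From Stdlib Require Import Relations.
Set Implicit Arguments. Unset Strict Implicit. Unset Printing Implicit Defensive.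

Definition ps (N : nat) (X : {ffun 'I_N -> nat}) (k : nat) : nat :=
  \sum_(j < N) (j < k) * X j.

Lemma ps0 N X : @ps N X 0 = 0.
Proof. by rewrite /ps big1. Qed.

Lemma psS N X (i : 'I_N) : @ps N X i.+1 = ps X i + X i.
Proof.
rewrite /ps (bigD1 i) //= [in RHS](bigD1 i) //=.
rewrite ltnSn ltnn mul1n mul0n add0n addnC; congr (_ + _).
apply: eq_bigr => j Hj; rewrite ltnS leq_eqVlt.
have -> : (nat_of_ord j == i) = false.
  by apply/negbTE; apply: contra Hj => /eqP e; apply/eqP; apply: val_inj.
done.
Qed.

Lemma ps_ge N X k : N <= k -> @ps N X k = \sum_(j < N) X j.
Proof.
move=> h; apply: eq_bigr => j _; by rewrite (leq_trans (ltn_ord j) h) mul1n.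
Qed.

Lemma ps_mono N X k k' : k <= k' -> @ps N X k <= ps X k'.
Proof.
move=> h; apply: leq_sum => j _; case: (ltnP j k) => hj //=.
by rewrite (leq_trans hj h).
Qed.

Lemma ps_le_sum N X k : @ps N X k <= \sum_(j < N) X j.
Proof. apply: leq_sum => j _; case: (j < k); rewrite ?mul1n ?mul0n //. Qed.

Lemma sum_ind N (j : 'I_N) k : \sum_(l < N) (l < k) * (l == j) = (j < k).
Proof.
rewrite (bigD1 j) //= eqxx muln1 big1 ?addn0 // => l /negbTE ->; by rewrite muln0.
Qed.

Lemma shift_ps N (X Y : {ffun 'I_N -> nat}) (i j : 'I_N) :
  (forall l, X l + (l == j) = Y l + (l == i)) ->
  forall k, ps X k + (j < k) = ps Y k + (i < k).
Proof.
move=> h k; rewrite /ps -(sum_ind j k) -(sum_ind i k) -!big_split /=.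
by apply: eq_bigr => l _; rewrite -!mulnDr h.
Qed.

Lemma msum m n (A : monomial m n) : \sum_(i < n.+1) sval A i = m.
Proof. exact: (eqP (svalP A)). Qed.

Lemma ps_le_m m n (A : monomial m n) k : ps (sval A) k <= m.
Proof. by have := ps_le_sum (sval A) k; rewrite msum. Qed.

Lemma psN m n (A : monomial m n) k : n.+1 <= k -> ps (sval A) k = m.
Proof. by move=> h; rewrite ps_ge // msum. Qed.

Lemma ps_inj m n (A B : monomial m n) :
  (forall k, k <= n.+1 -> ps (sval A) k = ps (sval B) k) -> A = B.
Proof.
move=> h; apply: val_inj; apply/ffunP => i.
have e1 := psS (sval A) i; have e2 := psS (sval B) i.
have := h i.+1 (ltn_ord i); have := h i (ltnW (ltn_ord i)).
rewrite e1 e2 => -> /eqP; rewrite eqn_add2l => /eqP.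
exact.
Qed.

Lemma shift_cover N (X Y : {ffun 'I_N -> nat}) (i j : 'I_N) :
  (j : nat) = i.+1 ->
  (forall l, X l + (l == j) = Y l + (l == i)) ->
  forall k, ps X k = ps Y k + (k == i.+1).
Proof.
move=> ej h k; have := shift_ps h k; rewrite ej.
case: (ltngtP k i.+1) => hk /=.
- by rewrite !addn0.
- by move=> /eqP; rewrite eqn_add2r => /eqP ->; rewrite addn0.
- by rewrite addn0.
Qed.

Lemma cover_ps m n (A B : monomial m n) :
  Bcover A B -> exists i : 'I_n.+1, i < n /\ forall k, ps (sval A) k = ps (sval B) k + (k == i.+1).
Proof.
case=> i [j [ej [hi [hj ho]]]]; exists i; split; first by rewrite -ltnS -ej.
have ij : (i == j) = false.
  by apply/negbTE; apply/eqP => e; move: ej; rewrite -e => /eqP; rewrite eqn_leq ltnn andbF.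
apply: (shift_cover ej) => l.
case: (eqVneq l i) => [->|li].
  by rewrite hi ij addn0.
case: (eqVneq l j) => [->|lj].
  by rewrite hj addn0 addn1.
by rewrite !addn0 ho.
Qed.

Definition lep m n (A B : monomial m n) := forall k, ps (sval B) k <= ps (sval A) k.

Lemma Bge_lep m n (A B : monomial m n) : Bge A B -> lep A B.
Proof.
elim=> {A B} [A B c|A|A B C _ h1 _ h2] k.
- by case: (cover_ps c) => i [_ ->]; rewrite leq_addr.
- by [].
- exact: leq_trans (h2 k) (h1 k).
Qed.

Definition SP m n (A : monomial m n) := \sum_(k < n.+2) ps (sval A) k.

Lemma sum_eqk N k : k < N -> \sum_(l < N) (nat_of_ord l == k) = 1.
Proof.
move=> kN; rewrite (bigD1 (Ordinal kN)) //= eqxx big1 // => l hl.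
by apply/eqP; rewrite eqb0; apply: contra hl => /eqP e; apply/eqP; apply: val_inj.
Qed.

Lemma step m n (A B : monomial m n) : lep A B ->
  (exists k, ps (sval B) k < ps (sval A) k) ->
  exists B' : monomial m n, Bcover B' B /\ lep A B' /\ SP B' = (SP B).+1.
Proof.
move=> h [k0 hk0].
pose P := fun k => ps (sval B) k < ps (sval A) k.
have ub : forall k, P k -> k <= n.
  move=> k; rewrite /P; case: (leqP k n) => // hk.
  by rewrite !psN // ltnn.
case: (ex_maxnP (ex_intro P k0 hk0) ub) => k hk kmax.
have k0p : 0 < k by move: hk; case: k {kmax} => //; rewrite /P !ps0.
have kn := ub _ hk.
have iN : k.-1 < n.+1 by lia.
have kN : k < n.+1 by lia.
pose io := Ordinal iN; pose jo := Ordinal kN.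
have eij : (jo : nat) = io.+1 by rewrite /= prednK.
have ij : (io == jo) = false.
  apply/negbTE; apply/eqP => e; move: eij; rewrite -e => /eqP.
  by rewrite eqn_leq ltnn andbF.
have Bpos : 0 < sval B jo.
  have e := psS (sval B) jo.
  have hk1 : ps (sval A) k.+1 <= ps (sval B) k.+1.
    by rewrite leqNgt; apply/negP => c; have := kmax _ c; rewrite ltnn.
  have := ps_mono (sval A) (leqnSn k); move: hk1 hk; rewrite /P e /=; lia.
pose Y := [ffun l : 'I_n.+1 => if l == io then sval B l + 1
   else if l == jo then sval B l - 1 else sval B l].
have key : forall l, Y l + (l == jo) = sval B l + (l == io).
  move=> l; rewrite ffunE; case: (eqVneq l io) => [->|li].
    by rewrite ij addn0 addn1.
  case: (eqVneq l jo) => [->|lj]; last by [].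
  by rewrite addn1 addn0 subn1 prednK.
have sY : \sum_(i < n.+1) Y i == m.
  have := shift_ps key n.+1; rewrite !ltn_ord !ps_ge // msum => /eqP.
  by rewrite eqn_add2r.
exists (exist _ Y sY).
have psY := shift_cover eij key.
split; [|split].
- exists io, jo; split; first exact: eij.
  split; first by rewrite /= ffunE eqxx.
  split; first by rewrite /= ffunE eq_sym ij eqxx subn1 addn1 prednK.
  by move=> l li lj; rewrite /= ffunE (negbTE li) (negbTE lj).
- move=> l; rewrite /= psY /= prednK //.
  case: (eqVneq l k) => [->|_]; first by rewrite addn1.
  by rewrite addn0.
- rewrite /SP /=; under eq_bigr => l _ do rewrite psY; rewrite big_split /= prednK //.
  by rewrite sum_eqk ?addn1 // ltnS ltnW.
Qed.

Lemma lep_Bge m n (A B : monomial m n) : lep A B -> Bge A B.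
Proof.
suff: forall d B, lep A B -> SP A - SP B <= d -> Bge A B.
  by move=> H h; apply: (H _ B h (leqnn _)).
have SPle : forall B, lep A B -> SP B <= SP A.
  by move=> C h; apply: leq_sum => k _; apply: h.
elim=> [|d IH] C h hd; case: (boolP [exists k : 'I_n.+2, ps (sval C) k < ps (sval A) k]).
- move/existsP=> [k hk]; case: (step h (ex_intro (fun k : nat => ps (sval C) k < ps (sval A) k) _ hk)) => B' [c [h' s]].
  have := SPle _ h'; rewrite s; lia.
- move/existsPn => hn; have -> : A = C; last exact: rt_refl.
  apply: ps_inj => k kn; apply/eqP; rewrite eqn_leq h andbT.
  by have := hn (Ordinal (kn : k < n.+2)); rewrite -leqNgt.
- move/existsP=> [k hk]; case: (step h (ex_intro (fun k : nat => ps (sval C) k < ps (sval A) k) _ hk)) => B' [c [h' s]].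
  apply: rt_trans (rt_step _ _ _ _ c); apply: IH => //.
  have := SPle _ h'; rewrite s; lia.
- move/existsPn => hn; have -> : A = C; last exact: rt_refl.
  apply: ps_inj => k kn; apply/eqP; rewrite eqn_leq h andbT.
  by have := hn (Ordinal (kn : k < n.+2)); rewrite -leqNgt.
Qed.

Definition cnt m n (A : monomial m n) (k : nat) : nat :=
  \sum_(j < n) (m.+1 - k <= ps (sval A) j.+1).

Definition fcnt m n (A : monomial m n) : {ffun 'I_m.+1 -> nat} :=
  [ffun k : 'I_m.+1 => cnt A k.+1 - cnt A k].

Lemma cnt0 m n (A : monomial m n) : cnt A 0 = 0.
Proof.
rewrite /cnt big1 // => j _; rewrite subn0.
by have := ps_le_m A j.+1; rewrite leqNgt => /negbTE ->.
Qed.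

Lemma cntM m n (A : monomial m n) : cnt A m.+1 = n.
Proof.
rewrite /cnt subnn (eq_bigr (fun _ => 1)) // sum_nat_const card_ord.
by rewrite muln1.
Qed.

Lemma cnt_mono m n (A : monomial m n) k : cnt A k <= cnt A k.+1.
Proof.
apply: leq_sum => j _; case: (boolP (m.+1 - k <= _)) => // H.
by rewrite (leq_trans _ H) // subnS leq_pred.
Qed.

Lemma ps_fcnt m n (A : monomial m n) k : k <= m.+1 -> ps (fcnt A) k = cnt A k.
Proof.
elim: k => [|k IH] hk; first by rewrite ps0 cnt0.
have := psS (fcnt A) (Ordinal hk); rewrite /= => ->.
by rewrite IH ?(ltnW hk) // ffunE /= subnKC // cnt_mono.
Qed.

Lemma fcnt_sum m n (A : monomial m n) : \sum_(k < m.+1) fcnt A k == n.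
Proof. by rewrite -(ps_ge (fcnt A) (leqnn _)) ps_fcnt // cntM. Qed.

Definition f m n (A : monomial m n) : monomial n m := exist _ (fcnt A) (fcnt_sum A).

Lemma sufL1 (p : nat -> bool) t : (forall i i', i <= i' -> p i -> p i') ->
  p t -> forall N, N - t <= \sum_(i < N) p i.
Proof.
move=> mono pt; elim=> [|N IH]; first by [].
rewrite big_ord_recr /=; case: (leqP t N) => h.
  by rewrite (mono _ _ h pt) /= addn1 subSn.
by have -> : N.+1 - t = 0 by lia.
Qed.

Lemma sufL2 (p : nat -> bool) t : (forall i i', i <= i' -> p i -> p i') ->
  ~~ p t -> forall N, \sum_(i < N) p i <= N - t.+1.
Proof.
move=> mono pt; elim=> [|N IH]; first by rewrite big_ord0.
rewrite big_ord_recr /=; case: (leqP N t) => h.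
  have -> : p N = false by apply/negbTE; apply: contra pt; apply: mono.
  by rewrite addn0 subSS (leq_trans IH) // leq_sub2l.
case: (p N) => /=; first by rewrite addn1 subSn.
by rewrite addn0 (leq_trans IH) // leq_sub2r.
Qed.

Lemma suffix (p : nat -> bool) t n : (forall i i', i <= i' -> p i -> p i') ->
  t < n -> (n - t <= \sum_(i < n) p i) = p t.
Proof.
move=> mono tn; case: (boolP (p t)) => h; first exact: sufL1.
apply/negbTE; rewrite -ltnNge; apply: leq_ltn_trans (sufL2 mono h n) _; lia.
Qed.

Lemma count_le (n : nat) (b : nat -> bool) : \sum_(i < n) b i <= n.
Proof.
elim: n => [|n IH]; first by rewrite big_ord0.
rewrite big_ord_recr /=; case: (b n) => /=.
  by rewrite addn1.
by rewrite addn0 (leq_trans IH).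
Qed.

Lemma count_min M x : \sum_(j < M) (M - j <= x) = minn M x.
Proof.
elim: M => [|M IH]; first by rewrite big_ord0 min0n.
rewrite big_ord_recl /=; under eq_bigr => i _ do rewrite /= subSS.
rewrite IH subn0; case: (leqP M.+1 x) => h /=; lia.
Qed.

Lemma ff m n (A : monomial m n) : f (f A) = A.
Proof.
apply: ps_inj => k kn; rewrite /= ps_fcnt // /cnt.
under eq_bigr => j _ do rewrite /= (ps_fcnt _ (leqW (ltn_ord j))).
have claim : forall j : 'I_m, (n.+1 - k <= cnt A j.+1) = (m - j <= ps (sval A) k).
  move=> j; have jm := ltn_ord j.
  case: k kn => [|t] kn.
    have := count_le n (fun i => m.+1 - j.+1 <= ps (sval A) i.+1).
    rewrite /cnt => hc; rewrite ps0 subn0 (leqNgt n.+1) ltnS hc /=.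
    by apply/esym/negbTE; rewrite -ltnNge subn_gt0.
  rewrite subSS; case: (ltnP t n) => tn.
    rewrite /cnt subSS.
    have mono : forall i i', i <= i' -> (m - j <= ps (sval A) i.+1) -> (m - j <= ps (sval A) i'.+1).
      move=> i i' ii' /= H; apply: leq_trans H _; apply: ps_mono; by rewrite ltnS.
    exact: (suffix mono tn).
  have -> : t = n by lia.
  by rewrite subnn leq0n psN // leq_subr.
under eq_bigr => j _ do rewrite claim.
by rewrite count_min; apply/minn_idPr; apply: ps_le_m.
Qed.

Lemma f_mono m n (A B : monomial m n) : lep A B -> lep (f A) (f B).
Proof.
move=> h k; rewrite /=; case: (leqP k m.+1) => km.
  rewrite !ps_fcnt //; apply: leq_sum => j _.
  case: (boolP (m.+1 - k <= _)) => // H; by rewrite (leq_trans H (h _)).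
by rewrite !ps_ge ?(ltnW km) // !(eqP (fcnt_sum _)).
Qed.

Theorem mainTheorem3 (m n : nat) : 0 < m -> 0 < n -> poset_iso m n n m.
Proof.
move=> _ _; exists (@f m n); split.
  by exists (@f n m) => A; apply: ff.
move=> A B; split => H.
  by apply: lep_Bge; apply: f_mono; apply: Bge_lep.
rewrite -(ff A) -(ff B); apply: lep_Bge; apply: f_mono; exact: Bge_lep.
Qed.
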